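(* Let $n\ge 2$ and $m=n-1$, let $\lambda_1,\dots,\lambda_n>0$, and let $X_1,\dots,X_n$ be independent random variables with $X_i\sim\mathrm{Poisson}(\lambda_i)$. Let $\mathbf A\in\mathrm{Mat}_{m\times n}(\mathbb{N})$ (where $\mathbb{N}=\mathbb{Z}_{\ge 0}$), and define $(Y_1,\dots,Y_m)^T=\mathbf A(X_1,\dots,X_n)^T$ and $F_{\mathbf Y}(b_1,\dots,b_m)=\mathbb{P}(Y_1=b_1,\dots,Y_m=b_m)$, so that \[ F_{\mathbf Y}(b)=\sum_{\substack{k\in\mathbb{N}^n\\ \mathbf A k=b}}\frac{\lambda_1^{k_1}}{k_1!}\cdots\frac{\lambda_n^{k_n}}{k_n!}\,e^{-(\lambda_1+\dots+\lambda_n)} . \] Suppose $\mathbf A$ has rank $r=m=n-1$ and all of its elementary divisors $d_1,\dots,d_r$ equal $\pm1$. Then $F_{\mathbf Y}$ can be written as a sum over a single index: there exist an integer matrix $\mathbf M\in\mathrm{Mat}_{n\times m}(\mathbb{Z})$ and an integer vector $v\in\mathbb{Z}^n$ such that for every $b\in\mathbb{N}^m$, writing $k(j)=\mathbf M b+j v$, \[ F_{\mathbf Y}(b)=\sum_{\substack{j\in\mathbb{Z}\\ k(j)\in\mathbb{N}^n}}\frac{\lambda_1^{k_1(j)}}{k_1(j)!}\cdots\frac{\lambda_n^{k_n(j)}}{k_n(j)!}\,e^{-(\lambda_1+\dots+\lambda_n)} . \]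
   Context: Elementary divisors: every $\mathbf A\in\mathrm{Mat}_{m\times n}(\mathbb{Z})$ of rank $r$ has a Smith normal form, i.e. there are matrices $\mathbf P\in\mathrm{Mat}_{m\times m}(\mathbb{Z})$, $\mathbf Q\in\mathrm{Mat}_{n\times n}(\mathbb{Z})$ invertible over $\mathbb{Z}$ such that $\mathbf{PAQ}$ is the $m\times n$ matrix with diagonal entries $d_1,\dots,d_r,0,\dots,0$ and zeros elsewhere, with $d_i\ne0$ and $d_1\mid d_2\mid\cdots\mid d_r$; the $d_i$ are unique up to sign and are called the elementary divisors of $\mathbf A$. Equivalently $d_i=\pm\Delta_i/\Delta_{i-1}$ where $\Delta_i$ is the gcd of the $i\times i$ minors of $\mathbf A$ ($\Delta_0=1$). *)

(* Defs.v *)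
From HB Require Import structures.
From mathcomp Require Import all_boot all_order all_algebra.
From mathcomp Require Import classical_sets reals ereal esum sequences.
From mathcomp.analysis Require Import exp.
Set Implicit Arguments. Unset Strict Implicit. Unset Printing Implicit Defensive.
Import Order.TTheory GRing.Theory Num.Theory.
Local Open Scope ring_scope.

(* Elementary divisors of an integer matrix (Smith normal form):
   d = [d_1; ...; d_r] are elementary divisors of A iff all d_i <> 0,
   d_1 | d_2 | ... | d_r, and there are P, Q invertible over Z with
   P A Q = diag(d_1,...,d_r,0,...,0) (m x n). Then r = size d = rank A. *)
Definition smith_diag (m n : nat) (d : seq int) : 'M[int]_(m, n) :=
  \matrix_(i < m, j < n) (if (nat_of_ord i == nat_of_ord j) && (i < size d)%N
                          then d`_i else 0).

Definition elementary_divisors (m n : nat) (A : 'M[int]_(m, n)) (d : seq int) :=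
  all (fun x => x != 0) d /\
  (forall i, (i.+1 < size d)%N -> (d`_i %| d`_i.+1)%Z) /\
  exists (P : 'M[int]_m) (Q : 'M[int]_n),
    P \in unitmx /\ Q \in unitmx /\ P *m A *m Q = smith_diag m n d.

Definition poisson_weight {R : realType} (n : nat) (lambda : 'I_n -> R)
  (k : 'cV[int]_n) : R :=
  (\prod_(i < n) (lambda i ^+ `|k i ord0|%N / (`|k i ord0|%N)`!%:R))
  * expR (- \sum_(i < n) lambda i).

Definition nonneg_vec (p : nat) (k : 'cV[int]_p) : Prop := forall i, 0 <= k i ord0.

Definition F_Y {R : realType} (m n : nat) (lambda : 'I_n -> R)
  (A : 'M[int]_(m, n)) (b : 'cV[int]_m) : \bar R :=
  (\esum_(k in [set k : 'cV[int]_n | nonneg_vec k /\ A *m k = b])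
     (poisson_weight lambda k)%:E)%E.

(* Main.v *)
Require Import Defs.
From HB Require Import structures.
From mathcomp Require Import all_boot all_order all_algebra.
From mathcomp Require Import classical_sets reals ereal esum sequences.
From mathcomp.analysis Require Import exp.
Import Order.TTheory GRing.Theory Num.Theory.
Local Open Scope ring_scope.
Section H.
Variables (p : nat) (d : seq int).
Hypothesis hs : size d = p.
Hypothesis d1 : all (fun x => `|x| == 1) d.

Let wd (i : 'I_p) : 'I_p.+1 := widen_ord (leqnSn p) i.

Lemma dd1 (i : 'I_p) : d`_i * d`_i = 1.
Proof.
have hi : (i < size d)%N by rewrite hs ltn_ord.
have /eqP h := (all_nthP 0 d1) i hi.
by rewrite -expr2 -real_normK ?num_real // h expr1n.
Qed.

Lemma D_mul (x : 'cV[int]_p.+1) (i : 'I_p) :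
  (smith_diag p p.+1 d *m x) i ord0 = d`_i * x (wd i) ord0.
Proof.
rewrite mxE (bigD1 (wd i)) //= big1 ?addr0.
  by rewrite mxE /= eqxx hs ltn_ord.
move=> j hj; rewrite mxE.
case: eqP => [hij|]; last by rewrite mul0r.
by exfalso; move/eqP: hj; apply; apply/val_inj; move: hij => /= hij; rewrite /=; congruence.
Qed.

Lemma Dt_mulw (y : 'cV[int]_p) (i : 'I_p) :
  (smith_diag p.+1 p d *m y) (wd i) ord0 = d`_i * y i ord0.
Proof.
rewrite mxE (bigD1 i) //= big1 ?addr0.
  by rewrite mxE /= eqxx hs ltn_ord.
move=> j hj; rewrite mxE.
case: eqP => [hij|]; last by rewrite mul0r.
by exfalso; move/eqP: hj; apply; apply/val_inj; move: hij => /= hij; rewrite /=; congruence.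
Qed.

Lemma Dt_mulm (y : 'cV[int]_p) :
  (smith_diag p.+1 p d *m y) ord_max ord0 = 0.
Proof.
rewrite mxE big1 // => j _; rewrite mxE.
case: eqP => [hij|]; last by rewrite mul0r.
by have := ltn_ord j; rewrite -hij /= ltnn.
Qed.

Lemma ordS_case (i : 'I_p.+1) : (exists j : 'I_p, i = wd j) \/ i = ord_max.
Proof.
case: (ltnP i p) => h.
  by left; exists (Ordinal h); apply/val_inj.
right; apply/val_inj => /=; apply/eqP; rewrite eqn_leq h andbT.
by rewrite -ltnS ltn_ord.
Qed.

Lemma DDt (y : 'cV[int]_p) : smith_diag p p.+1 d *m (smith_diag p.+1 p d *m y) = y.
Proof.
apply/matrixP => i j; rewrite (ord1 j) D_mul Dt_mulw mulrA dd1 mul1r //.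
Qed.

Lemma De : smith_diag p p.+1 d *m delta_mx ord_max (ord0 : 'I_1) = 0.
Proof.
apply/matrixP => i j; rewrite (ord1 j) D_mul !mxE.
case: eqP => [h|]; last by rewrite mulr0.
move/(congr1 val): h => /= h; by have := ltn_ord i; rewrite h ltnn.
Qed.
End H.

Theorem mainTheorem1 (R : realType) (n : nat) (hn : (2 <= n)%N)
  (lambda : 'I_n -> R) (hlam : forall i, 0 < lambda i)
  (A : 'M[int]_(n.-1, n)) (hA : forall i j, 0 <= A i j)
  (hdiv : exists d : seq int, elementary_divisors A d /\ size d = n.-1 /\
            all (fun x => `|x| == 1) d) :
  exists (M : 'M[int]_(n, n.-1)) (v : 'cV[int]_n),
    forall b : 'cV[int]_(n.-1), nonneg_vec b ->
      F_Y lambda A b =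
      (\esum_(j in [set j : int | nonneg_vec (M *m b + j *: v)])
         (poisson_weight lambda (M *m b + j *: v))%:E)%E.
Proof.
case: n hn lambda hlam A hA hdiv => [|[|p]] // _ lambda _ A _
  [d [[_ [_ [P [Q [uP [uQ PAQ]]]]]] [sd d1]]].
change (P *m A *m Q = smith_diag p.+1 p.+2 d) in PAQ.
set D := smith_diag p.+1 p.+2 d.
set Dt := smith_diag p.+2 p.+1 d.
pose E : 'cV[int]_p.+2 := delta_mx ord_max ord0.
exists (Q *m Dt *m P), (Q *m E) => b _.
have hA : A = invmx P *m D *m invmx Q.
  by rewrite /D -PAQ !mulmxA mulVmx // mul1mx mulmxK.
have key : forall j : int,
    invmx Q *m (Q *m Dt *m P *m b + j *: (Q *m E)) = Dt *m (P *m b) + j *: E.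
  by move=> j; rewrite mulmxDr -scalemxAr !mulmxA mulVmx // !mul1mx -!mulmxA.
have ent : forall j : int, (Dt *m (P *m b) + j *: E) ord_max ord0 = j.
  move=> j; rewrite mxE Dt_mulm mxE mxE !eqxx /= mulr1 add0r //.
rewrite /F_Y (reindex_esum [set j | nonneg_vec (Q *m Dt *m P *m b + j *: (Q *m E))] _
   (fun j => Q *m Dt *m P *m b + j *: (Q *m E))) //.
split.
- move=> j /= hj; split => //.
  rewrite hA -(mulmxA (invmx P *m D)) key -(mulmxA (invmx P)) mulmxDr (@DDt _ _ sd d1).
  have DE : D *m (j *: E) = 0.
    by rewrite -scalemxAr (@De _ _ sd) scaler0.
  rewrite DE addr0.
  by rewrite mulKmx.
- move=> j1 j2 _ _ h.
  have := congr1 (fun x => (invmx Q *m x) ord_max ord0) h.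
  by rewrite /= !key !ent.
- move=> k [hk hAk].
  have ek : Q *m Dt *m P *m b + ((invmx Q *m k) ord_max ord0) *: (Q *m E) = k.
    rewrite -[RHS](mulKVmx uQ) -[LHS](mulKVmx uQ) key; congr (Q *m _).
    have Pb : P *m b = D *m (invmx Q *m k).
      by rewrite /D -hAk -PAQ !mulmxA mulmxK.
    apply/matrixP => i c; rewrite (ord1 c).
    case: (@ordS_case _ i) => [[i' ->]|->]; last by rewrite ent.
    have Ew : forall c0, E (widen_ord (leqnSn p.+1) i') c = 0.
      move=> c0.
      rewrite /E mxE.
      have -> : (widen_ord (leqnSn p.+1) i' == ord_max) = false.
        apply/negbTE/eqP => /(congr1 val) /= h.
        by have := ltn_ord i'; rewrite h ltnn.
      by rewrite andFb.
    rewrite mxE (@Dt_mulw _ _ sd) [X in _ + X]mxE /E [delta_mx _ _ _ _]mxE.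
    have -> : (widen_ord (leqnSn p.+1) i' == ord_max) = false.
      apply/negbTE/eqP => /(congr1 val) /= h.
      by have := ltn_ord i'; rewrite h ltnn.
    rewrite andFb.
    rewrite (_ : false%:R = 0 :> int) // mulr0 addr0 Pb (@D_mul _ _ sd) mulrA (@dd1 _ _ sd d1) mul1r //.
  by exists ((invmx Q *m k) ord_max ord0); [rewrite /mkset ek; exact: hk | exact: ek].
Qed.
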